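(* Let $F \in S_d$ and let $\mathbb{X} \subset \mathbb{P}^n$ be a finite set of distinct points with $I_{\mathbb{X}} \subseteq F^\perp$. Let $I \subset T$ be any homogeneous ideal generated in degree $e>0$ and let $t \in I_e$. If $t$ is not a zero divisor in $T/(I_{\mathbb{X}} : I)$, then for all sufficiently large integers $s$ \[ e \cdot |\mathbb{X}| \;\geq\; \sum_{i=0}^s HF\big(T/((I_{\mathbb{X}} : I)+(t)),\, i\big) \;\geq\; \sum_{i=0}^{s} HF\big(T/((F^\perp : I)+( t) ),\, i\big). \]
   Context: $k$ is an algebraically closed field of characteristic zero, $S=k[x_0,\ldots,x_n]$ and $T=k[X_0,\ldots,X_n]$ (standard graded, $n\ge 1$), and $T$ acts on $S$ by differentiation: $X_i\circ F=\partial F/\partial x_i$, extended linearly. For a form $F\in S$, $F^\perp=\{g\in T : g\circ F=0\}$. For a homogeneous ideal $J\subseteq T$, $HF(T/J,i)=\dim_k T_i-\dim_k J_i$. $I_{\mathbb{X}}\subseteq T$ denotes the homogeneous ideal of the point set $\mathbb{X}$, and $J:I=\{g\in T: gI\subseteq J\}$. *)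

(* Defs.v *)
From HB Require Import structures.
From mathcomp Require Import all_boot all_order all_algebra.
From mathcomp Require Import mpoly.
From Stdlib Require Import ClassicalEpsilon.

Set Implicit Arguments.
Unset Strict Implicit.
Unset Printing Implicit Defensive.

Import GRing.Theory.
Local Open Scope ring_scope.

Definition pbool (P : Prop) : bool :=
  if excluded_middle_informative P then true else false.

Section Apolarity.
Variables (k : fieldType) (n : nat).

(* S = T = k[x_0..x_n] : polynomials in n+1 variables. *)
Local Notation poly := {mpoly k[n.+1]}.

Definition pset := poly -> Prop.

(* Action of T on S by differentiation: g o F = sum_m g_m * d^m F / dx^m. *)
Definition apolar (g F : poly) : poly :=
  \sum_(m <- msupp g) g@_m *: F^`M[m].

Definition perp (F : poly) : pset := fun g => apolar g F = 0.

Definition is_hideal (J : pset) : Prop :=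
  [/\ J 0,
      (forall a b, J a -> J b -> J (a + b)),
      (forall g a, J a -> J (g * a)) &
      (forall a i, J a -> J (pihomog mdeg i a))].

Definition generated_in_degree (J : pset) (e : nat) : Prop :=
  forall g, J g -> exists (r : nat) (h f : 'I_r -> poly),
    (forall j, J (f j) /\ f j \is e.-homog) /\ g = \sum_(j < r) h j * f j.

Definition colon (J I : pset) : pset := fun g => forall h, I h -> J (g * h).

Definition add_princ (J : pset) (t : poly) : pset :=
  fun g => exists a h, J a /\ g = a + h * t.

(* dim_k J_i : the largest size of a linearly independent family of
   degree-i forms lying in J (T_i is the vector space dhomog n.+1 k i). *)
Definition dim_deg (J : pset) (i : nat) : nat :=
  \max_(r < (\dim (fullv : {vspace dhomog n.+1 k i})).+1 |
        pbool (exists s : seq (dhomog n.+1 k i),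
                 [/\ size s = r, free s & forall p, p \in s -> J (val p)]))
     (val r).

(* HF(T/J, i) = dim_k T_i - dim_k J_i *)
Definition HF (J : pset) (i : nat) : nat :=
  (\dim (fullv : {vspace dhomog n.+1 k i}) - dim_deg J i)%N.

(* Homogeneous ideal I_X of a finite set of points X = {[P a] : a < N} in
   P^n, each point given by a (nonzero) representative P a in k^(n+1):
   g in I_X iff every homogeneous component of g vanishes at every point. *)
Definition ideal_points (N : nat) (P : 'I_N -> 'I_n.+1 -> k) : pset :=
  fun g => forall (i : nat) (a : 'I_N), (pihomog mdeg i g).@[P a] = 0.

End Apolarity.

(* Main.v *)
Require Import Defs.
From HB Require Import structures.
From mathcomp Require Import all_boot all_order all_algebra.
From mathcomp Require Import mpoly.
From Stdlib Require Import ClassicalEpsilon.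
From mathcomp Require Import zify.

Set Implicit Arguments.
Unset Strict Implicit.
Unset Printing Implicit Defensive.
Import GRing.Theory.
Local Open Scope ring_scope.

Section Gen.
Variables (k : fieldType) (n : nat).
Local Notation poly := {mpoly k[n.+1]}.
Local Notation DH i := (dhomog n.+1 k i).

Lemma pboolT (Q : Prop) : Q -> pbool Q.
Proof. by rewrite /pbool; case: excluded_middle_informative. Qed.

Lemma pboolE (Q : Prop) : pbool Q -> Q.
Proof. by rewrite /pbool; case: excluded_middle_informative. Qed.

Definition lin_closed (J : pset k n) :=
  [/\ J 0, forall a b, J a -> J b -> J (a + b) & forall (c : k) a, J a -> J (c *: a)].

Lemma span_closed J i (X : seq (DH i)) v : lin_closed J ->
  (forall x, x \in X -> J (val x)) -> (v \in <<X>>)%VS -> J (val v).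
Proof.
case=> J0 JD JZ; elim: X v => [|x X IH] v HX.
  by rewrite span_nil memv0 => /eqP ->.
rewrite span_cons => /memv_addP [u /vlineP [c ->]] [w Hw ->].
rewrite raddfD /=; apply: JD; first by apply: JZ; apply: HX; rewrite inE eqxx.
by apply: IH => // y Hy; apply: HX; rewrite inE Hy orbT.
Qed.

Lemma free_size i (X : seq (DH i)) : free X -> (size X <= \dim (fullv : {vspace DH i}))%N.
Proof. by move=> /eqP <-; apply: dimvS; apply: subvf. Qed.

Lemma dim_deg_ge J i (X : seq (DH i)) : free X -> (forall x, x \in X -> J (val x)) ->
  (size X <= dim_deg J i)%N.
Proof.
move=> fX HX; have hs : (size X < (\dim (fullv : {vspace DH i})).+1)%N by rewrite ltnS free_size.
rewrite /dim_deg; apply: (leq_trans _ (leq_bigmax_cond (Ordinal hs) _)) => //.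
by apply: pboolT; exists X.
Qed.

Lemma dim_deg_attained J i : exists X : seq (DH i),
  [/\ size X = dim_deg J i, free X & forall x, x \in X -> J (val x)].
Proof.
rewrite /dim_deg.
set A := (fun r : 'I_(\dim (fullv : {vspace DH i})).+1 => pbool (exists s : seq (DH i),
                 [/\ size s = r, free s & forall p, p \in s -> J (val p)])).
have hA : (0 < #|A|)%N.
  apply/card_gt0P; exists ord0; rewrite /in_mem /=; apply: pboolT.
  by exists [::]; split => //; apply: nil_free.
have [r0 Ar0 ->] := @eq_bigmax_cond _ A (fun r => val r) hA.
have [s [hs1 hs2 hs3]] := pboolE Ar0.
by exists s.
Qed.

Lemma max_span J i (X : seq (DH i)) : free X -> (forall x, x \in X -> J (val x)) ->
  size X = dim_deg J i -> forall v, J (val v) -> (v \in <<X>>)%VS.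
Proof.
move=> fX HX sX v Jv; apply/negPn/negP => nv.
have f2 : free (v :: X) by rewrite free_cons nv fX.
have : (size (v :: X) <= dim_deg J i)%N.
  by apply: dim_deg_ge => // x; rewrite inE => /orP [/eqP ->|]; [|apply: HX].
by rewrite /= sX ltnn.
Qed.

Lemma dim_deg_mono J J' i : (forall p : DH i, J (val p) -> J' (val p)) ->
  (dim_deg J i <= dim_deg J' i)%N.
Proof.
move=> H; have [X [<- fX HX]] := dim_deg_attained J i.
by apply: dim_deg_ge => // x /HX /H.
Qed.

Lemma HF_mono J J' i : (forall p : DH i, J (val p) -> J' (val p)) ->
  (HF J' i <= HF J i)%N.
Proof. by move=> H; rewrite /HF leq_sub2l // dim_deg_mono. Qed.

End Gen.

Lemma dim_deg_le (k : fieldType) (n : nat) (J : pset k n) i :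
  (dim_deg J i <= \dim (fullv : {vspace dhomog n.+1 k i}))%N.
Proof. by have [X [<- fX _]] := dim_deg_attained J i; apply: free_size. Qed.
Section Key.
Variables (k : fieldType) (n : nat).
Local Notation poly := {mpoly k[n.+1]}.
Local Notation DH i := (dhomog n.+1 k i).
Variables (e : nat) (t : poly) (hte : t \is e.-homog).

Section MulT.
Variable j : nat.
Definition mulT (p : DH j) : DH (j + e) := DHomog (dhomogM (dhomog_is_dhomog p) hte).
Lemma mulT_is_linear : linear mulT.
Proof.
move=> c p q; apply: val_inj => /=.
by rewrite mulrDl scalerAl.
Qed.
HB.instance Definition _ := GRing.isLinear.Build k (DH j) (DH (j + e)) _ mulT mulT_is_linear.
Lemma val_mulT p : val (mulT p) = val p * t. Proof. by []. Qed.
End MulT.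

Variables (J : pset k n) (hJ : lin_closed J) (hnz : forall g, J (g * t) -> J g).

Lemma key j : (HF (add_princ J t) (j + e) + HF J j <= HF J (j + e))%N.
Proof.
have J0 : J 0 by case: hJ.
have [s1 [sz1 f1 H1]] := dim_deg_attained J (j + e).
have [s2 [sz2 f2 H2]] := dim_deg_attained J j.
pose U := (<<s2>>^C)%VS.
have /andP [/eqP spY fY] := vbasisP U.
set Y := vbasis U in spY fY.
pose Fm := linfun (@mulT j).
have FmE v : Fm v = @mulT j v by rewrite lfunE.
have C0 v : (v \in <<Y>>)%VS -> J (val v * t) -> v = 0.
  move=> vY /hnz Jv; rewrite spY in vY; apply/eqP; rewrite -memv0 -(capv_compl <<s2>>) memv_cap.
  by rewrite vY (max_span f2 H2 sz2 Jv).
have fFY : free (map Fm Y).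
  rewrite /free -limg_span limg_dim_eq ?size_map; first by apply: fY.
  apply/eqP; rewrite -subv0; apply/subvP => v /memv_capP [vY].
  rewrite memv_ker FmE => /eqP h; rewrite memv0 (C0 v vY) //.
  by rewrite -val_mulT h.
have fS : free (s1 ++ map Fm Y).
  rewrite cat_free f1 fFY /=; apply/directv_addP.
  apply/eqP; rewrite -subv0; apply/subvP => w /memv_capP [w1].
  rewrite -limg_span => /memv_imgP [v vY wE]; rewrite memv0 wE.
  have Jw := span_closed hJ H1 w1; rewrite wE FmE val_mulT in Jw.
  by rewrite (C0 v vY Jw) linear0.
have HS : forall x, x \in s1 ++ map Fm Y -> add_princ J t (val x).
  move=> x; rewrite mem_cat => /orP [/H1 Jx|/mapP [v _ ->]].
    by exists (val x), 0; rewrite mul0r addr0.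
  by exists 0, (val v); rewrite add0r FmE val_mulT.
have := dim_deg_ge fS HS.
rewrite size_cat size_map sz1 size_tuple dimv_compl (eqP f2) sz2.
have := free_size f2; rewrite sz2.
have := dim_deg_le (add_princ J t) (j + e).
rewrite /HF.
move: (\dim (fullv : {vspace DH j})) (\dim (fullv : {vspace DH (j + e)})) => D1 D2.
lia.
Qed.

Lemma HF_le i : (HF (add_princ J t) i <= HF J i)%N.
Proof.
apply: HF_mono => p Jp; exists (val p), 0; by rewrite mul0r addr0.
Qed.

End Key.
Section Pts.
Variables (k : fieldType) (n : nat).
Local Notation poly := {mpoly k[n.+1]}.
Local Notation DH i := (dhomog n.+1 k i).
Variables (N : nat) (P : 'I_N -> 'I_n.+1 -> k).

Lemma X_lin : lin_closed (ideal_points P).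
Proof.
split.
- by move=> i a; rewrite pihomog0 meval0.
- by move=> a b Ha Hb i c; rewrite pihomogD mevalD Ha Hb addr0.
- by move=> c a Ha i b; rewrite linearZ /= mevalZ Ha mulr0.
Qed.

Lemma X_hom d (q : poly) : q \is d.-homog -> (forall a, q.@[P a] = 0) ->
  ideal_points P q.
Proof.
move=> hq h0 i a; case: (eqVneq d i) => [<-|ne].
  by rewrite pihomog_dE.
by rewrite (pihomog_ne0 ne hq) meval0.
Qed.

Lemma X_mul_hom d (q : poly) : q \is d.-homog -> (forall a, q.@[P a] = 0) ->
  forall h, ideal_points P (q * h).
Proof.
move=> hq h0 h.
rewrite [h](@pihomog_partitionE _ _ mdeg (mmeasure mdeg h) h (leqnn _)) mulr_sumr.
have [X0 XD _] := X_lin.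
apply: (big_ind (fun x => ideal_points P x)) => // i _.
apply: (@X_hom (d + i)); first by apply: dhomogM => //; apply: pihomogP.
by move=> a; rewrite mevalM h0 mul0r.
Qed.

Section Ev.
Variable i : nat.
Definition ev (p : DH i) : 'rV[k]_N := \row_a (val p).@[P a].
Lemma ev_is_linear : linear ev.
Proof.
move=> c p q; apply/rowP => a; rewrite !mxE /=.
by rewrite mevalD mevalZ.
Qed.
HB.instance Definition _ := GRing.isLinear.Build k (DH i) 'rV[k]_N _ ev ev_is_linear.
End Ev.

Lemma HF_le_N (J : pset k n) i :
  (forall q : poly, q \is i.-homog -> (forall a, q.@[P a] = 0) -> J q) ->
  (HF J i <= N)%N.
Proof.
move=> HJ.
pose Fe := linfun (@ev i).
pose K := lker Fe.
have /andP [/eqP spB fB] := vbasisP K.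
have HB : forall x, x \in (vbasis K : seq _) -> J (val x).
  move=> x xB; have : (x \in <<vbasis K>>)%VS by apply: memv_span.
  rewrite spB memv_ker lfunE /= => /eqP ev0.
  apply: HJ; first by apply: dhomog_is_dhomog. move=> a.
  by move/rowP: ev0 => /(_ a); rewrite !mxE.
have := dim_deg_ge fB HB.
have := limg_ker_dim Fe fullv.
rewrite capfv size_tuple -/K.
have : (\dim (Fe @: fullv) <= N)%N.
  apply: leq_trans (dimvS (subvf _)) _.
  by rewrite dimvf (dim_matrix k 1 N); lia.
rewrite /HF => h1 h2 h3; rewrite -h2; lia.
Qed.

End Pts.

Lemma telescope (a b : nat -> nat) e N :
  (forall i, a i <= N)%N -> (forall i, b i <= a i)%N ->
  (forall j, b (j + e) + a j <= a (j + e))%N ->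
  forall s, (\sum_(i < s) b i <= e * N)%N.
Proof.
move=> aN ba key.
have Q s : (\sum_(0 <= i < s) b i + \sum_(0 <= i < s - e) a i <= \sum_(0 <= i < s) a i)%N.
  elim: s => [|s IH]; first by rewrite !big_geq.
  rewrite !big_nat_recr //=.
  case: (leqP e s) => hes.
    have -> : (s.+1 - e = (s - e).+1)%N by lia.
    rewrite big_nat_recr //=.
    have := key (s - e)%N; rewrite subnK //; lia.
  have -> : (s.+1 - e = s - e)%N by lia.
  have := ba s; lia.
move=> s; rewrite -(big_mkord xpredT b).
have := Q s.
have -> : (\sum_(0 <= i < s) a i = \sum_(0 <= i < s - e) a i + \sum_(s - e <= i < s) a i)%N.
  by rewrite -big_cat_nat // leq_subr.
have : (\sum_(s - e <= i < s) a i <= (s - (s - e)) * N)%N.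
  by rewrite -sum_nat_const_nat; apply: leq_sum => i _.
have : ((s - (s - e)) * N <= e * N)%N by apply: leq_mul => //; lia.
lia.
Qed.

Theorem theorem3p3
  (k : closedFieldType) (hchar : [pchar k] =i pred0)
  (n : nat) (hn : (0 < n)%N)
  (d : nat) (F : {mpoly k[n.+1]}) (hF : F \is d.-homog)
  (N : nat) (P : 'I_N -> 'I_n.+1 -> k)
  (hPnz : forall a, exists j, P a j != 0)
  (hPdist : forall a b, a != b -> ~ (exists c : k, forall j, P a j = c * P b j))
  (hXF : forall g, ideal_points P g -> perp F g)
  (I : pset k n) (e : nat) (he : (0 < e)%N)
  (hI : is_hideal I) (hgen : generated_in_degree I e)
  (t : {mpoly k[n.+1]}) (ht : I t) (hte : t \is e.-homog)
  (hnzd : forall g, colon (ideal_points P) I (g * t) ->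
                    colon (ideal_points P) I g) :
  exists s0 : nat, forall s : nat, (s0 <= s)%N ->
    (\sum_(i < s.+1) HF (add_princ (colon (ideal_points P) I) t) i <= e * N)%N /\
    (\sum_(i < s.+1) HF (add_princ (colon (perp F) I) t) i
       <= \sum_(i < s.+1) HF (add_princ (colon (ideal_points P) I) t) i)%N.
Proof.
exists 0%N => s _.
set X := ideal_points P.
set J := colon X I.
have [X0 XD XZ] := X_lin P.
have hJ : lin_closed J.
  split.
  - by move=> h _; rewrite mul0r.
  - by move=> a b Ha Hb h Ih; rewrite mulrDl; apply: XD; [apply: Ha|apply: Hb].
  - by move=> c a Ha h Ih; rewrite -scalerAl; apply: XZ; apply: Ha.
split.
- apply: (@telescope (fun i => HF J i) (fun i => HF (add_princ J t) i) e N).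
  + move=> i; apply: (@HF_le_N _ _ _ P) => q hq h0 h Ih.
    exact: (X_mul_hom hq h0 h).
  + by move=> i; apply: HF_le.
  + by move=> j; apply: (key hte hJ hnzd).
- apply: leq_sum => i _; apply: HF_mono => p [a [h [Ja ->]]].
  exists a, h; split => // g Ig; apply: hXF; exact: (Ja g Ig).
Qed.
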